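(* Let $a\in\mathbb F^*$ and let $g,h\in\mathcal R$ satisfy $x^n-a=hg$, where $\deg(h)=k$. Let $g_0$ be the constant coefficient of $g$, let $c=\gamma(a,g)$, and set $\widehat g^{r}=\rho_r(\theta^n(g))$ and $\widehat h^{l}=\rho_l(\theta^{-n}(h))$. Then: (1) $M_a^\theta(\overline g)^{\mathsf T}=M_{c^{-1}}^\theta(\overline{g^\#})$, where $g^\#=a\,\widehat g^{r}x^k-c\,g_0\,(x^n-c^{-1})$; (2) $M_c^\theta(\overline{x^k})\,M_a^\theta(\overline g)=M^\theta_{\theta^k(c^{-1})}(\overline{a\widehat g^{r}})^{\mathsf T}$; (3) $M^\theta_{\theta^{k-n}(c^{-1})}(\overline{x^{n-k}})\,M^\theta_{a^{-1}}(\overline{\widehat h^{l}})=M^\theta_c(\overline{a^{-1}h})^{\mathsf T}$.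
   Context: $\mathbb F$ is a finite field, $\theta\in\mathrm{Aut}(\mathbb F)$, and $\mathcal R=\mathbb F[x;\theta]$ is the skew polynomial ring: its elements are $\sum_i f_ix^i$ with $f_i\in\mathbb F$ (coefficients written on the left), with the usual addition and multiplication determined by $xb=\theta(b)x$ for $b\in\mathbb F$ together with associativity and distributivity. Fix $n\in\mathbb N$. For $b\in\mathbb F^*$, $\mathcal S_b=\mathcal R/\mathcal R(x^n-b)$ is the quotient left $\mathcal R$-module; $\overline f$ denotes the coset of $f\in\mathcal R$, and in an expression $M^\theta_b(\overline f)$ the coset is always taken in $\mathcal S_b$. The map $\mathfrak p_b:\mathbb F^n\to\mathcal S_b$, $(c_0,\dots,c_{n-1})\mapsto\overline{\sum_{i=0}^{n-1}c_ix^i}$ is a left $\mathbb F$-linear isomorphism and $\mathfrak v_b=\mathfrak p_b^{-1}$. The $(\theta,b)$-circulant of $\overline f\in\mathcal S_b$ is the $n\times n$ matrix $M^\theta_b(\overline f)$ whose row with index $i$ ($i=0,\dots,n-1$) is $\mathfrak v_b(\overline{x^if})$. The automorphism $\theta$ (and its integer powers $\theta^m$) is extended to $\mathcal R$ coefficientwise: $\theta^m(\sum f_ix^i)=\sum\theta^m(f_i)x^i$. For a right divisor $g=\sum g_ix^i$ of $x^n-a$ (so $g_0\neq0$) one sets $\gamma(a,g)=a\,g_0^{-1}\theta^n(g_0)$. For nonzero $f=\sum_{i=0}^tf_ix^i$ with $f_t\ne0$ the left and right reciprocals are $\rho_l(f)=\sum_{i=0}^t\theta^i(f_{t-i})x^i$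 and $\rho_r(f)=\sum_{i=0}^t\theta^{i-t}(f_{t-i})x^i$. *)

(* Defs.v *)
From HB Require Import structures.
From mathcomp Require Import all_boot all_order all_algebra.
From Stdlib Require Import ClassicalEpsilon.
Set Implicit Arguments. Unset Strict Implicit. Unset Printing Implicit Defensive.
Import GRing.Theory.
Local Open Scope ring_scope.

(* Elements of R = F[x;theta] are represented by their (left) coefficient
   lists, i.e. by {poly F}; only the multiplication differs. theta is a ring
   endomorphism of the finite field F, hence an automorphism; its inverse is
   [finv theta] (fingraph). *)

Section Skew.
Variables (F : finFieldType) (theta : {rmorphism F -> F}).

Definition thetaz (m : int) (x : F) : F :=
  match m with
  | Posz k => iter k theta x
  | Negz k => iter k.+1 (finv theta) x
  end.

(* skew product: (sum f_i x^i)(sum g_j x^j) = sum f_i theta^i(g_j) x^(i+j) *)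
Definition smul (p q : {poly F}) : {poly F} :=
  \poly_(m < (size p + size q).-1) \sum_(i < m.+1) p`_i * iter i theta q`_(m - i).

Definition thetaP (m : int) (p : {poly F}) : {poly F} := map_poly (thetaz m) p.

(* f and g have the same coset in S_b = R / R(x^n - b) *)
Definition scong (n : nat) (b : F) (f g : {poly F}) : Prop :=
  exists q : {poly F}, f - g = smul q ('X^n - b%:P).

Definition pb (n : nat) (c : 'rV[F]_n) : {poly F} :=
  \sum_(i < n) c 0 i *: 'X^i.

Definition vb (n : nat) (b : F) (f : {poly F}) : 'rV[F]_n :=
  epsilon (inhabits (0 : 'rV[F]_n)) (fun c => scong n b f (pb c)).

Definition circ (n : nat) (b : F) (f : {poly F}) : 'M[F]_n :=
  \matrix_(i < n) vb n b (smul 'X^i f).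

Definition gamma (n : nat) (a : F) (g : {poly F}) : F :=
  a * (g`_0)^-1 * thetaz (n%:Z) g`_0.

Definition rho_l (f : {poly F}) : {poly F} :=
  \poly_(i < size f) iter i theta f`_((size f).-1 - i).
Definition rho_r (f : {poly F}) : {poly F} :=
  \poly_(i < size f) thetaz (i%:Z - ((size f).-1)%:Z) f`_((size f).-1 - i).

End Skew.

(* Main.v *)
Require Import Defs.
From HB Require Import structures.
From mathcomp Require Import all_boot all_order all_algebra.
From mathcomp Require Import zify ring.
From Stdlib Require Import ClassicalEpsilon.
Set Implicit Arguments. Unset Strict Implicit. Unset Printing Implicit Defensive.
Import GRing.Theory.
Local Open Scope ring_scope.

Ltac decide_ifs :=
  repeat match goal with
  | |- context [if ?b then _ else _] =>
    first [ rewrite (_ : b = true); [|by lia]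
          | rewrite (_ : b = false); [|by apply/negbTE; lia] ]
  end.

Section Skew.
Variables (F : finFieldType) (theta : {rmorphism F -> F}).
Local Notation T e := (iter e theta).
Local Notation U e := (iter e (finv theta)).
Local Notation sm := (smul theta).

Lemma th_inj : injective theta.
Proof. exact: fmorph_inj. Qed.

Lemma TD e1 e2 x : T (e1 + e2) x = T e1 (T e2 x).
Proof. by rewrite iterD. Qed.
Lemma TM e x y : T e (x * y) = T e x * T e y.
Proof. by elim: e => //= e ->; rewrite rmorphM. Qed.
Lemma TA e x y : T e (x + y) = T e x + T e y.
Proof. by elim: e => //= e ->; rewrite rmorphD. Qed.
Lemma TN e x : T e (- x) = - T e x.
Proof. by elim: e => //= e ->; rewrite rmorphN. Qed.
Lemma TB e x y : T e (x - y) = T e x - T e y.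
Proof. by rewrite TA TN. Qed.
Lemma T0 e : T e 0 = 0 :> F.
Proof. by elim: e => //= e ->; rewrite rmorph0. Qed.
Lemma T1 e : T e 1 = 1 :> F.
Proof. by elim: e => //= e ->; rewrite rmorph1. Qed.
Lemma Tn e m : T e (m%:R) = m%:R :> F.
Proof. by elim: e => //= e ->; rewrite rmorph_nat. Qed.
Lemma TV e x : T e (x^-1) = (T e x)^-1.
Proof. by elim: e => //= e ->; rewrite fmorphV. Qed.
Lemma Tinj e : injective (T e).
Proof. elim: e => // e IH x y /= /th_inj; exact: IH. Qed.
Lemma Teq0 e x : (T e x == 0) = (x == 0).
Proof. apply/eqP/eqP => [|->]; last exact: T0. move=> H; apply: (@Tinj e); by rewrite H T0. Qed.
Lemma TC e1 e2 x : T e1 (T e2 x) = T e2 (T e1 x).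
Proof. by rewrite -!TD addnC. Qed.
Lemma TU e x : T e (U e x) = x.
Proof. elim: e x => [|e IH] x //. rewrite iterSr /= f_finv; [exact: IH|exact: th_inj]. Qed.
Lemma UT e x : U e (T e x) = x.
Proof. apply: (@Tinj e); by rewrite TU. Qed.
Lemma TUle N e x : (e <= N)%N -> T N (U e x) = T (N - e) x.
Proof. by move=> le; rewrite -{1}(subnK le) TD TU. Qed.
Lemma U0 e : U e 0 = 0 :> F.
Proof. by apply: (@Tinj e); rewrite TU T0. Qed.

Lemma thetazN (e : nat) x : thetaz theta (- (e%:Z)) x = U e x.
Proof. by case: e. Qed.
Lemma thetazP (e : nat) x : thetaz theta (e%:Z) x = T e x.
Proof. by []. Qed.

Lemma sum_delta (N i : nat) (G : nat -> F) :
  \sum_(l < N) (if l == i :> nat then G l else 0) = if (i < N)%N then G i else 0.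
Proof.
case: ifP => iN.
  rewrite (bigD1 (Ordinal iN)) //= eqxx big1 ?addr0 // => l /eqP li.
  case: eqP => // e; case: li; exact: val_inj.
by rewrite big1 // => l _; case: eqP => // e; move: (ltn_ord l); rewrite e iN.
Qed.

Lemma coef_smul p q m :
  (sm p q)`_m = \sum_(i < m.+1) p`_i * T i q`_(m - i).
Proof.
rewrite /smul coef_poly; case: ltnP => // le; apply/esym/big1 => i _.
have [lt|ge] := ltnP i (size p); last by rewrite nth_default // mul0r.
rewrite [q`_(m - i)]nth_default ?T0 ?mulr0 //.
move: le lt; rewrite -subn1; move: (size p) (size q) (nat_of_ord i) => a b c; lia.
Qed.

Lemma coef_smul_rev p q m :
  (sm p q)`_m = \sum_(k < m.+1) p`_(m - k) * T (m - k) q`_k.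
Proof.
rewrite coef_smul (reindex_inj rev_ord_inj) /=; apply: eq_bigr => k _.
by rewrite subSS subKn // -ltnS.
Qed.

Lemma smul0l q : sm 0 q = 0.
Proof. by apply/polyP => m; rewrite coef_smul coef0 big1 // => i _; rewrite coef0 mul0r. Qed.

Lemma smulDl p1 p2 q : sm (p1 + p2) q = sm p1 q + sm p2 q.
Proof.
apply/polyP => m; rewrite coefD !coef_smul -big_split /=.
by apply: eq_bigr => i _; rewrite coefD mulrDl.
Qed.
Lemma smulNl p q : sm (- p) q = - sm p q.
Proof.
apply/polyP => m; rewrite coefN !coef_smul -sumrN.
by apply: eq_bigr => i _; rewrite coefN mulNr.
Qed.
Lemma smulBl p1 p2 q : sm (p1 - p2) q = sm p1 q - sm p2 q.
Proof. by rewrite smulDl smulNl. Qed.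
Lemma smulDr p q1 q2 : sm p (q1 + q2) = sm p q1 + sm p q2.
Proof.
apply/polyP => m; rewrite coefD !coef_smul -big_split /=.
by apply: eq_bigr => i _; rewrite coefD TA mulrDr.
Qed.
Lemma smulNr p q : sm p (- q) = - sm p q.
Proof.
apply/polyP => m; rewrite coefN !coef_smul -sumrN.
by apply: eq_bigr => i _; rewrite coefN TN mulrN.
Qed.
Lemma smulBr p q1 q2 : sm p (q1 - q2) = sm p q1 - sm p q2.
Proof. by rewrite smulDr smulNr. Qed.

Lemma smulA p q r : sm (sm p q) r = sm p (sm q r).
Proof.
apply/polyP => i; rewrite coef_smul_rev coef_smul.
pose coef3 j k := p`_j * T j q`_(i - j - k)%N * T (i - k) r`_k.
transitivity (\sum_(k < i.+1) \sum_(j < i.+1 | (j <= i - k)%N) coef3 j k).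
  apply: eq_bigr => /= k _; rewrite coef_smul big_distrl /=.
  rewrite (big_ord_narrow_leq (leq_subr _ _)) /=.
  by apply: eq_bigr => j _; rewrite /coef3 -subnDA addnC subnDA.
rewrite (exchange_big_dep predT) //=; apply: eq_bigr => j _.
transitivity (\sum_(k < i.+1 | (k <= i - j)%N) coef3 j k).
  apply: eq_bigl => k; have := ltn_ord k; have := ltn_ord j; lia.
rewrite (big_ord_narrow_leq (leq_subr j i)) coef_smul_rev.
rewrite (@big_morph _ _ (T j) 0 +%R 0 +%R (TA j) (T0 j)) big_distrr /=.
apply: eq_bigr => k _; rewrite /coef3 /= TM -TD mulrA; congr (_ * _ * T _ _).
have hk := ltn_ord k; have hj := ltn_ord j; lia.
Qed.



Lemma coef_smulCl x p m : (sm (x%:P) p)`_m = x * p`_m.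
Proof.
rewrite coef_smul big_ord_recl /= coefC eqxx subn0 big1 ?addr0 //.
by move=> i _; rewrite coefC /= mul0r.
Qed.
Lemma smulCl x p : sm (x%:P) p = x *: p.
Proof. by apply/polyP => m; rewrite coef_smulCl coefZ. Qed.

Lemma coef_smulCr p x m : (sm p (x%:P))`_m = p`_m * T m x.
Proof.
rewrite coef_smul_rev big_ord_recl /= coefC eqxx subn0 big1 ?addr0 //.
by move=> i _; rewrite coefC /= T0 mulr0.
Qed.

Lemma smulXnr p k : sm p 'X^k = p * 'X^k.
Proof.
apply/polyP => m; rewrite coef_smul_rev coefMXn.
transitivity (\sum_(l < m.+1) (if l == k :> nat then p`_(m - l) else 0)).
  by apply: eq_bigr => l _; rewrite coefXn Tn; case: eqP; rewrite ?mulr1 ?mulr0.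
rewrite (sum_delta _ _ (fun l => p`_(m - l))).
case: ifP => h1; case: ifP => h2 //; exfalso; move: h1 h2; lia.
Qed.

Lemma coef_smulXnl k f m :
  (sm 'X^k f)`_m = if (k <= m)%N then T k f`_(m - k) else 0.
Proof.
rewrite coef_smul.
transitivity (\sum_(l < m.+1) (if l == k :> nat then T l f`_(m - l) else 0)).
  by apply: eq_bigr => l _; rewrite coefXn; case: eqP; rewrite ?mul1r ?mul0r.
by rewrite (sum_delta _ _ (fun l => T l f`_(m - l))) ltnS.
Qed.

Lemma coef_smul_Xnb n b d m : (0 < n)%N ->
  (sm d ('X^n - b%:P))`_m = (if (n <= m)%N then d`_(m - n) else 0) - d`_m * T m b.
Proof.
move=> n0; rewrite smulBr coefB smulXnr coefMXn coef_smulCr ltnNge.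
by case: leqP.
Qed.

Lemma size_smul_le p q : (size (sm p q) <= (size p + size q).-1)%N.
Proof. exact: size_poly. Qed.

Lemma coef_smul_lead p q : p != 0 -> q != 0 ->
  (sm p q)`_((size p).-1 + (size q).-1) = lead_coef p * T (size p).-1 (lead_coef q).
Proof.
move=> p0 q0; rewrite coef_smul (bigD1 (@Ordinal ((size p).-1 + (size q).-1).+1 (size p).-1 (leq_addr (size q).-1 (size p).-1))) //=.
rewrite addKn big1 ?addr0 // => i /eqP ne.
have [lt|ge] := ltnP i (size p).
  have lt' : ((size p).-1 > i)%N.
    have : (i <= (size p).-1)%N by rewrite -ltnS prednK // lt0n size_poly_eq0.
    rewrite leq_eqVlt => /orP [/eqP e|//]; case: ne; exact: val_inj.
  rewrite [q`_ _]nth_default ?T0 ?mulr0 //.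
  have : (0 < size q)%N by rewrite lt0n size_poly_eq0.
  move: lt'; move: (size q) (size p) (nat_of_ord i) => a c e; lia.
by rewrite nth_default // mul0r.
Qed.

Lemma size_smul p q : p != 0 -> q != 0 -> size (sm p q) = ((size p + size q).-1)%N.
Proof.
move=> p0 q0; apply/anti_leq; rewrite size_smul_le /=.
have := coef_smul_lead p0 q0.
have : lead_coef p * T (size p).-1 (lead_coef q) != 0.
  by rewrite mulf_neq0 ?lead_coef_eq0 // Teq0 lead_coef_eq0.
move=> nz e; rewrite -e in nz.
have : ((size p).-1 + (size q).-1 < size (sm p q))%N.
  by rewrite ltnNge; apply/negP => h; move: nz; rewrite nth_default // eqxx.
have : (0 < size p)%N by rewrite lt0n size_poly_eq0.
have : (0 < size q)%N by rewrite lt0n size_poly_eq0.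
move: (size p) (size q) (size (sm p q)) => a c e'; lia.
Qed.

Lemma smul_eq0 p q : q != 0 -> sm p q = 0 -> p = 0.
Proof.
move=> q0 e; apply/eqP; apply/negPn/negP => p0.
have := size_smul p0 q0; rewrite e size_poly0.
have : (0 < size p)%N by rewrite lt0n size_poly_eq0.
have : (0 < size q)%N by rewrite lt0n size_poly_eq0.
move: (size p) (size q) => a c; lia.
Qed.


Lemma coef_pb n (r : 'rV[F]_n) (j : 'I_n) : (pb r)`_j = r 0 j.
Proof.
rewrite /pb coef_sum (bigD1 j) //= coefZ coefXn eqxx mulr1 big1 ?addr0 //.
move=> i /negbTE ne; rewrite coefZ coefXn.
have -> : (j == i :> nat) = false by rewrite eq_sym; exact: ne.
by rewrite mulr0.
Qed.

Lemma coef_pb_ge n (r : 'rV[F]_n) m : (n <= m)%N -> (pb r)`_m = 0.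
Proof.
move=> nm; rewrite /pb coef_sum big1 // => i _; rewrite coefZ coefXn.
have -> : (m == i :> nat) = false.
  have := ltn_ord i; move: (nat_of_ord i) => c ci; apply/negbTE/eqP; lia.
by rewrite mulr0.
Qed.

Lemma pb_uniq n b (r1 r2 : 'rV[F]_n) d : (0 < n)%N ->
  pb r1 - pb r2 = sm d ('X^n - b%:P) -> d = 0.
Proof.
move=> n0 e; apply/eqP; apply/negPn/negP => d0.
have := congr1 (fun p : {poly F} => p`_((size d).-1 + n)) e.
rewrite /= coefB !coef_pb_ge ?leq_addl // subr0 coef_smul_Xnb // leq_addl addnK.
rewrite [d`_(_ + n)]nth_default ?mul0r ?subr0.
  by move=> h; move: d0; rewrite -lead_coef_eq0 /lead_coef -h eqxx.
have : (0 < size d)%N by rewrite lt0n size_poly_eq0.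
move: n0; move: (size d) => a; lia.
Qed.

Lemma vb_eq n b f (r : 'rV[F]_n) : (0 < n)%N ->
  scong theta n b f (pb r) -> vb theta n b f = r.
Proof.
move=> n0 [q e]; rewrite /vb.
set P := (fun c : 'rV[F]_n => scong theta n b f (pb c)).
have := @epsilon_spec _ (inhabits (0 : 'rV[F]_n)) P (ex_intro _ r (ex_intro _ q e)).
set r' := epsilon _ _ => -[q' e'].
have E : pb r' - pb r = sm (q - q') ('X^n - b%:P).
  by rewrite smulBl -e -e'; ring.
have d0 := pb_uniq n0 E.
have pe : pb r' = pb r.
  by apply/eqP; rewrite -subr_eq0; apply/eqP; rewrite E d0 smul0l.
by apply/rowP => j; rewrite -!coef_pb pe.
Qed.

Lemma circE n b (f : {poly F}) (i j : 'I_n) : (size f <= n.+1)%N ->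
  circ theta n b f i j =
    (if (i <= j)%N then T i f`_(j - i) else 0) + T i f`_(n + j - i) * T j b.
Proof.
move=> sf; have n0 : (0 < n)%N := leq_ltn_trans (leq0n i) (ltn_ord i).
have -> : circ theta n b f i j = (vb theta n b (sm 'X^i f)) 0 j by rewrite /circ mxE.
set r := \row_(j < n) ((if (i <= j)%N then T i f`_(j - i) else 0) + T i f`_(n + j - i) * T j b).
rewrite (@vb_eq _ _ _ r) ?mxE //.
exists (\poly_(l < n) T i f`_(n + l - i)).
apply/polyP => m; rewrite coefB coef_smulXnl coef_smul_Xnb // !coef_poly.
have io := ltn_ord i.
case: (ltnP m n) => mn.
  have -> : (pb r)`_m = r 0 (Ordinal mn) by exact: (coef_pb r (Ordinal mn)).
  rewrite mxE /=; ring.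
rewrite coef_pb_ge // subr0 mul0r subr0.
have -> : (i <= m)%N by move: (nat_of_ord i) io => c; lia.
case: ltnP => h.
  by have -> : (n + (m - n) - i = m - i)%N by move: (nat_of_ord i) io => c; lia.
rewrite nth_default ?T0 //; move: sf; move: (nat_of_ord i) io => c; move: (size f) => a; lia.
Qed.


Lemma circXkE n (b : F) k (i l : 'I_n) : (k <= n)%N ->
  circ theta n b 'X^k i l =
   (if (i <= l)%N && (l - i == k)%N then 1 else 0)
   + (if (n + l - i == k)%N then T l b else 0).
Proof.
move=> kn; rewrite circE ?size_polyXn // !coefXn !Tn.
by case: (i <= l)%N; case: (_ == k)%N; case: (_ == k)%N; rewrite /= ?mul1r ?mul0r.
Qed.

Lemma circXk_mul1 n (b : F) k (M : 'M[F]_n) (i j l : 'I_n) : (k <= n)%N ->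
  (l = i + k :> nat)%N -> (circ theta n b 'X^k *m M) i j = M l j.
Proof.
move=> kn li; have io := ltn_ord i; have lo := ltn_ord l.
rewrite mxE (bigD1 l) //= circXkE // big1.
  have -> : ((i <= l)%N && (l - i == k)%N) = true by apply/andP; split; apply/eqP || idtac; lia.
  have -> : (n + l - i == k)%N = false by apply/negbTE/eqP; lia.
  by rewrite !addr0 mul1r.
move=> l' /eqP ne; have lo' := ltn_ord l'.
have ne' : (nat_of_ord l' <> nat_of_ord l) by move=> h; apply: ne; exact: val_inj.
rewrite circXkE //.
have -> : ((i <= l')%N && (l' - i == k)%N) = false by apply/negbTE/negP => /andP [h1 /eqP h2]; lia.
have -> : (n + l' - i == k)%N = false by apply/negbTE/eqP; lia.
by rewrite addr0 mul0r.
Qed.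

Lemma circXk_mul2 n (b : F) k (M : 'M[F]_n) (i j l : 'I_n) : (k <= n)%N ->
  (n <= i + k)%N -> (l = i + k - n :> nat)%N ->
  (circ theta n b 'X^k *m M) i j = T l b * M l j.
Proof.
move=> kn ikn li; have io := ltn_ord i; have lo := ltn_ord l.
rewrite mxE (bigD1 l) //= circXkE // big1.
  have -> : ((i <= l)%N && (l - i == k)%N) = false by apply/negbTE/negP => /andP [h1 /eqP h2]; lia.
  have -> : (n + l - i == k)%N = true by apply/eqP; lia.
  by rewrite add0r addr0.
move=> l' /eqP ne; have lo' := ltn_ord l'.
have ne' : (nat_of_ord l' <> nat_of_ord l) by move=> h; apply: ne; exact: val_inj.
rewrite circXkE //.
have -> : ((i <= l')%N && (l' - i == k)%N) = false by apply/negbTE/negP => /andP [h1 /eqP h2]; lia.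
have -> : (n + l' - i == k)%N = false by apply/negbTE/eqP; lia.
by rewrite addr0 mul0r.
Qed.


Lemma coef_smul0 p q : (sm p q)`_0 = p`_0 * q`_0.
Proof. by rewrite coef_smul big_ord1. Qed.

Lemma rdiv_rel n (a : F) (u v : {poly F}) : (0 < n)%N -> a != 0 ->
  'X^n - a%:P = sm u v ->
  (forall l, T n v`_l * T l a = gamma theta n a v * v`_l)
  /\ sm (map_poly (T n) v) u = 'X^n - (gamma theta n a v)%:P.
Proof.
move=> n0 a0 e.
have nz : 'X^n - a%:P != 0 :> {poly F} by rewrite -size_poly_eq0 size_XnsubC.
have v0 : v != 0.
  apply/eqP => h; move: nz; rewrite e h; have -> : sm u 0 = 0.
    by apply/polyP => m; rewrite coef_smul coef0 big1 // => i _; rewrite coef0 T0 mulr0.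
  by rewrite eqxx.
have e0 := congr1 (fun p : {poly F} => p`_0) e; rewrite /= coef_smul0 coefB coefXn coefC eqxx in e0.
have vz : v`_0 != 0.
  apply/eqP => h; move: e0; rewrite h mulr0 => /eqP; rewrite subr_eq0 eq_sym.
  have -> : (0 == n :> nat) = false by rewrite eq_sym; apply/negbTE; rewrite -lt0n.
  by move=> h2; move: a0; rewrite (eqP h2) /= mulr0n eqxx.
set q := map_poly (T n) v.
have qc m : q`_m = T n v`_m by rewrite coef_map_id0 // T0.
have A : sm 'X^n v = sm q 'X^n.
  apply/polyP => m; rewrite coef_smulXnl smulXnr coefMXn ltnNge qc; by case: leqP.
set w := 'X^n - sm q u.
have B : sm q (a%:P) = sm w v.
  by rewrite /w smulBl smulA -e A smulBr opprB addrC subrK.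
have sB : (size (sm q (a%:P)) <= size v)%N.
  apply/leq_sizeP => m hm; rewrite coef_smulCr qc nth_default ?T0 ?mul0r //.
have w1 : (size w <= 1)%N.
  have [->|wn0] := eqVneq w 0; first by rewrite size_poly0.
  move: sB; rewrite B size_smul //.
  have : (0 < size v)%N by rewrite lt0n size_poly_eq0.
  move: (size w) (size v) => x y; lia.
have wc := size1_polyC w1.
set lam := w`_0.
have B' : sm q (a%:P) = lam *: v by rewrite B wc smulCl.
have e1 := congr1 (fun p : {poly F} => p`_0) B'.
rewrite /= coef_smulCr coefZ qc /= in e1.
have lamc : lam = gamma theta n a v.
  rewrite /gamma /=; apply: (mulIf vz); rewrite -e1.
  by rewrite [RHS]mulrAC divfK // mulrC.
split.
  move=> l; have := congr1 (fun p : {poly F} => p`_l) B'.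
  by rewrite /= coef_smulCr coefZ qc lamc.
by rewrite -lamc -wc /w opprB addrC subrK.
Qed.


Lemma UTle N e x : (e <= N)%N -> U e (T N x) = T (N - e) x.
Proof. by move=> le; rewrite -{1}(subnK le) addnC TD UT. Qed.

Lemma thetaz_neg (m t : nat) x : (m <= t)%N -> thetaz theta (m%:Z - t%:Z) x = U (t - m) x.
Proof. by move=> le; rewrite -opprB subzn // thetazN. Qed.

Lemma thetaP_pos (N : nat) v : thetaP theta (N%:Z) v = map_poly (T N) v.
Proof. by []. Qed.
Lemma thetaP_neg (N : nat) v : thetaP theta (- (N%:Z)) v = map_poly (U N) v.
Proof. by apply: eq_map_poly => x; rewrite thetazN. Qed.

Lemma coef_rho_r_map (v : {poly F}) N m : v != 0 -> ((size v).-1 <= N)%N ->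
  (rho_r theta (map_poly (T N) v))`_m =
  if (m <= (size v).-1)%N then T (N - ((size v).-1 - m)) v`_((size v).-1 - m) else 0.
Proof.
move=> v0 le; rewrite /rho_r size_map_poly_id0 ?Teq0 ?lead_coef_eq0 // coef_poly.
have sv : (0 < size v)%N by rewrite lt0n size_poly_eq0.
have -> : (m < size v)%N = (m <= (size v).-1)%N by move: sv; move: (size v) => x; lia.
case: ifP => // h; rewrite coef_map_id0 ?T0 // thetaz_neg // UTle //.
move: le; move: (size v) => x; lia.
Qed.

Lemma coef_rho_l_map (v : {poly F}) N m : v != 0 ->
  (rho_l theta (map_poly (U N) v))`_m =
  if (m <= (size v).-1)%N then T m (U N v`_((size v).-1 - m)) else 0.
Proof.
move=> v0; have UN0 : U N 0 = 0 by exact: U0.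
have Ul : U N (lead_coef v) != 0.
  by apply/eqP => h; move: v0; rewrite -lead_coef_eq0 -[lead_coef v](TU N) h T0 eqxx.
rewrite /rho_l size_map_poly_id0 // coef_poly.
have sv : (0 < size v)%N by rewrite lt0n size_poly_eq0.
have -> : (m < size v)%N = (m <= (size v).-1)%N by move: sv; move: (size v) => x; lia.
by case: ifP => // h; rewrite coef_map_id0.
Qed.

Lemma rdiv_nz n (a : F) (u v : {poly F}) : (0 < n)%N -> a != 0 ->
  'X^n - a%:P = sm u v ->
  [/\ u != 0, v != 0, u`_0 * v`_0 = - a & (size u + size v = n.+2)%N].
Proof.
move=> n0 a0 e.
have nz : 'X^n - a%:P != 0 :> {poly F} by rewrite -size_poly_eq0 size_XnsubC.
have v0 : v != 0.
  apply/eqP => h; move: nz; rewrite e h; have -> : sm u 0 = 0.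
    by apply/polyP => m; rewrite coef_smul coef0 big1 // => i _; rewrite coef0 T0 mulr0.
  by rewrite eqxx.
have u0 : u != 0 by apply/eqP => h; move: nz; rewrite e h smul0l eqxx.
have e0 := congr1 (fun p : {poly F} => p`_0) e; rewrite /= coef_smul0 coefB coefXn coefC eqxx in e0.
rewrite (_ : (0 == n :> nat) = false) in e0; last by rewrite eq_sym; apply/negbTE; rewrite -lt0n.
split => //; first by rewrite -e0 /= mulr0n sub0r.
have := size_smul u0 v0; rewrite -e size_XnsubC //.
have : (0 < size v)%N by rewrite lt0n size_poly_eq0.
have : (0 < size u)%N by rewrite lt0n size_poly_eq0.
move: (size u) (size v) => x y; lia.
Qed.


Lemma main n (a : F) (g h : {poly F}) (k : nat) :
  a != 0 ->
  'X^n - a%:P = smul theta h g ->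
  (size h).-1 = k ->
  let g0 := g`_0 in
  let c := gamma theta n a g in
  let ghr := rho_r theta (thetaP theta (n%:Z) g) in
  let hhl := rho_l theta (thetaP theta (- (n%:Z)) h) in
  let gsharp := smul theta (smul theta (a%:P) ghr) 'X^k
                - smul theta ((c * g0)%:P) ('X^n - (c^-1)%:P) in
  [/\ (circ theta n a g)^T = circ theta n c^-1 gsharp,
      circ theta n c 'X^k *m circ theta n a g
        = (circ theta n (thetaz theta (k%:Z) c^-1) (smul theta (a%:P) ghr))^T
    & circ theta n (thetaz theta (k%:Z - n%:Z) c^-1) 'X^(n - k)
        *m circ theta n a^-1 hhl
        = (circ theta n c (smul theta (a^-1)%:P h))^T ].
Proof.
move=> a0 e hk g0 c ghr hhl gsharp.
have [n0|npos] := posnP n.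
  by subst n; split; apply/matrixP => -[].
have [hnz gnz hg0 shg] := rdiv_nz npos a0 e.
have [Ig Eq2] := rdiv_rel npos a0 e.
have sh : size h = k.+1.
  by rewrite -hk prednK // lt0n size_poly_eq0.
have sg0 : (0 < size g)%N by rewrite lt0n size_poly_eq0.
have kn : (k <= n)%N by move: shg sg0; rewrite sh; move: (size g) => x; lia.
set t := (n - k)%N.
have sg : size g = t.+1 by move: shg; rewrite sh /t; move: (size g) => x; lia.
have g0nz : g0 != 0.
  by apply/eqP => h0; move: hg0; rewrite /g0 in h0; rewrite h0 mulr0 => /eqP; rewrite eq_sym oppr_eq0 (negbTE a0).
have cnz : c != 0 by rewrite /c /gamma mulf_neq0 ?mulf_neq0 ?invr_eq0 // Teq0.
have Ig' l : T n g`_l * T l a = c * g`_l by exact: Ig.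
have Eq2' : 'X^n - c%:P = sm (map_poly (T n) g) h by rewrite Eq2.
have [Ih _] := rdiv_rel npos cnz Eq2'.
have [_ _ hg0' _] := rdiv_nz npos cnz Eq2'.
have gamh : gamma theta n c h = T n a.
  rewrite /gamma /= coef_map_id0 ?T0 // in hg0' *.
  have h0nz : h`_0 != 0 by apply/eqP => h0; move: hg0; rewrite h0 mul0r => /eqP; rewrite eq_sym oppr_eq0 (negbTE a0).
  have cE : c = - (T n g`_0 * h`_0) by rewrite hg0' opprK.
  rewrite {1}cE (_ : T n a = - T n (h`_0 * g`_0)); last by rewrite -TN hg0 opprK.
  rewrite TM; field; exact: h0nz.
have Ih' l : T n h`_l * T l c = T n a * h`_l by rewrite -gamh; exact: Ih.
have gz l : (t < l)%N -> g`_l = 0 by move=> lt; rewrite nth_default // sg.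
have hz l : (k < l)%N -> h`_l = 0 by move=> lt; rewrite nth_default // sh.
have ghrE m : ghr`_m = if (m <= t)%N then T (k + m) g`_(t - m) else 0.
  rewrite /ghr thetaP_pos coef_rho_r_map // sg /=; last by rewrite /t leq_subr.
  by case: ifP => // hm; congr (T _ _); rewrite /t; lia.
have hhlE m : hhl`_m = if (m <= k)%N then T m (U n h`_(k - m)) else 0.
  by rewrite /hhl thetaP_neg coef_rho_l_map // sh.
have gsE m : gsharp`_m = if (m < n)%N then a * T m g`_(n - m) + (if m == 0%N then g0 else 0) else 0.
  rewrite /gsharp smulCl smulCl smulXnr coefB coefMXn coefZ coefZ coefB coefXn coefC ghrE.
  have cg : c * g0 = a * T n g0.
    rewrite /c /gamma /g0 thetazP; field; exact: g0nz.
  case: (ltngtP m n) => [mn|mn|->].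
  - case: (@eqP _ m n) => [?|_]; first lia.
    case: (ltnP m k) => mk.
      rewrite gz ?T0; last by rewrite /t; lia.
      by case: (m == 0%N) => /=; rewrite ?mulr0n; field.
    rewrite (_ : (m - k <= t)%N = true); last by rewrite /t; lia.
    rewrite (_ : (k + (m - k) = m)%N); last by lia.
    rewrite (_ : (t - (m - k) = n - m)%N); last by rewrite /t; lia.
    by case: (m == 0%N) => /=; rewrite ?mulr0n; field.
  - case: (@eqP _ m n) => [?|_]; first lia.
    case: (@eqP _ m 0%N) => [?|_]; first lia.
    rewrite (_ : (m < k)%N = false); last by apply/negbTE; lia.
    rewrite (_ : (m - k <= t)%N = false); last by rewrite /t; apply/negbTE; lia.
    by rewrite /= mulr0 mulr0n subrr mulr0 subr0.
  - case: (@eqP _ n 0%N) => [?|_]; first lia.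
    rewrite ifF; last by apply/negbTE; lia.
    rewrite ifT; last by rewrite /t; lia.
    rewrite (_ : (k + (n - k) = n)%N); last by lia.
    rewrite (_ : (t - (n - k) = 0)%N); last by rewrite /t; lia.
    by rewrite /= subr0 mulr1 cg /g0 subrr.
have sgs : (size gsharp <= n.+1)%N.
  by apply/leq_sizeP => m hm; rewrite gsE ifF //; apply/negbTE; lia.
have sgn : (size g <= n.+1)%N by rewrite sg /t; lia.
clearbody c.
split.
- apply/matrixP => i j; rewrite mxE !circE // !gsE.
  have io := ltn_ord i; have jo := ltn_ord j.
  case: (ltngtP i j) => ij.
  + decide_ifs.
    rewrite T0 mul0r !addr0 add0r TM -TD.
    rewrite (_ : (i + (j - i) = j)%N); last lia.
    rewrite (_ : (n - (j - i) = n + i - j)%N); last lia.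
    by rewrite mulrC.
  + decide_ifs.
    rewrite (gz (n + i - j)%N); last by rewrite /t; lia.
    rewrite T0 mul0r !addr0 add0r.
    rewrite (_ : (n - (n + j - i) = i - j)%N); last lia.
    set l := (i - j)%N.
    rewrite TM -TD (_ : (i + (n + j - i) = j + n)%N); last lia.
    rewrite (_ : nat_of_ord i = (j + l)%N); last by rewrite /l; lia.
    rewrite !TD -!TM; congr (T j _).
    by rewrite [T l a * _]mulrC Ig' mulrAC divff // mul1r.
  + decide_ifs.
    rewrite ij subnn subn0 addnK T0 mul0r addr0 TA TM /g0 /=; ring.
- rewrite thetazP smulCl.
  have sf : (size (a *: ghr) <= n.+1)%N.
    by apply/leq_sizeP => m hm; rewrite coefZ ghrE ifF ?mulr0 //; apply/negbTE; rewrite /t; lia.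
  apply/matrixP => i j; rewrite [RHS]mxE circE // !coefZ !ghrE.
  have io := ltn_ord i; have jo := ltn_ord j.
  case: (ltnP (i + k) n) => ikn.
  + rewrite (@circXk_mul1 n c k _ i j (Ordinal ikn)) // circE //=.
    case: (leqP j i) => ji.
    * have alpha : T (i + k) g`_(n + j - (i + k)) * T j a
                 = T j (a * T (k + (i - j)) g`_(t - (i - j))).
        rewrite (_ : (t - (i - j) = n + j - (i + k))%N); last by rewrite /t; lia.
        rewrite TM -TD (_ : (j + (k + (i - j)) = i + k)%N); last lia.
        by rewrite mulrC.
      case: (leqP (i + k) j) => h1.
      - decide_ifs.
        rewrite [RHS]addrC; congr (_ + _); last exact: alpha.
        set l := (j - (i + k))%N.
        rewrite (_ : (t - (n + i - j) = l)%N); last by rewrite /t /l; lia.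
        rewrite TM -!TD (_ : (j + (k + (n + i - j)) = (i + k) + n)%N); last lia.
        rewrite (_ : (i + k = j - l)%N); last by rewrite /l; lia.
        rewrite (_ : nat_of_ord j = ((j - l) + l)%N); last by rewrite /l; lia.
        rewrite addnK !TD -!TM; congr (T _ _).
        by rewrite [T l a * _]mulrC Ig' mulrAC divff // mul1r.
      - decide_ifs.
        by rewrite mulr0 T0 mul0r !addr0 add0r alpha.
    * case: (leqP (i + k) j) => ikj.
      - decide_ifs.
        rewrite (gz (n + j - (i + k))%N); last by rewrite /t; lia.
        rewrite T0 mul0r addr0 add0r.
        set l := (j - (i + k))%N.
        rewrite (_ : (t - (n + i - j) = l)%N); last by rewrite /t /l; lia.
        rewrite TM -!TD (_ : (j + (k + (n + i - j)) = (i + k) + n)%N); last lia.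
        rewrite (_ : (i + k = j - l)%N); last by rewrite /l; lia.
        rewrite (_ : nat_of_ord j = ((j - l) + l)%N); last by rewrite /l; lia.
        rewrite addnK !TD -!TM; congr (T _ _).
        by rewrite [T l a * _]mulrC Ig' mulrAC divff // mul1r.
      - decide_ifs.
        rewrite (gz (n + j - (i + k))%N); last by rewrite /t; lia.
        by rewrite !(T0, mulr0, mul0r, addr0, add0r).
  + have lo : (i + k - n < n)%N by lia.
    rewrite (@circXk_mul2 n c k _ i j (Ordinal lo)) // circE //=.
    case: (leqP j i) => ji.
    * case: (leqP (i + k - n) j) => rj.
      - decide_ifs.
        rewrite (gz (n + j - (i + k - n))%N); last by rewrite /t; lia.
        rewrite T0 mul0r addr0 mulr0 T0 mul0r addr0.
        set r := (i + k - n)%N.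
        set l := (j - r)%N.
        rewrite (_ : (t - (i - j) = l)%N); last by rewrite /t /l /r; lia.
        rewrite [RHS]TM -[X in _ = _ * X]TD (_ : (j + (k + (i - j)) = r + n)%N); last by rewrite /l /r; lia.
        rewrite (_ : nat_of_ord j = (r + l)%N); last by rewrite /l /r; lia.
        rewrite !TD -!TM; congr (T _ _).
        by rewrite -Ig' mulrC.
      - decide_ifs.
        rewrite (gz (n + j - (i + k - n))%N); last by rewrite /t; lia.
        by rewrite !(T0, mulr0, mul0r, addr0, add0r).
    * decide_ifs.
      rewrite (gz (n + j - (i + k - n))%N); last by rewrite /t; lia.
      rewrite (gz (j - (i + k - n))%N); last by rewrite /t; lia.
      by rewrite !(T0, mulr0, mul0r, addr0, add0r).
- rewrite /t thetaz_neg // smulCl -/t.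
  have sf : (size (a^-1 *: h) <= n.+1)%N.
    by apply/leq_sizeP => m hm; rewrite coefZ hz ?mulr0 //; lia.
  have shl : (size hhl <= n.+1)%N.
    by apply/leq_sizeP => m hm; rewrite hhlE ifF //; apply/negbTE; lia.
  have tn : (t <= n)%N by rewrite /t; lia.
  apply/matrixP => i j; rewrite [RHS]mxE circE // !coefZ.
  have io := ltn_ord i; have jo := ltn_ord j.
  case: (ltnP i k) => ik.
  + have lo : (i + t < n)%N by rewrite /t; lia.
    rewrite (@circXk_mul1 n _ t _ i j (Ordinal lo)) // circE //= !hhlE.
    have eps : (j <= i)%N -> T (i + t) (T (n + j - (i + t)) (U n h`_(k - (n + j - (i + t))))) * T j a^-1
               = T j (a^-1 * h`_(i - j)).
      move=> ji; rewrite (_ : (k - (n + j - (i + t)) = i - j)%N); last by rewrite /t; lia.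
      rewrite -TD (_ : (i + t + (n + j - (i + t)) = n + j)%N); last by rewrite /t; lia.
      by rewrite TUle ?leq_addr // addKn TM mulrC.
    have del : (i + t <= j)%N -> T (i + t) (T (j - (i + t)) (U n h`_(k - (j - (i + t)))))
               = T j (a^-1 * h`_(n + i - j)) * T i c.
      move=> rj; rewrite (_ : (k - (j - (i + t)) = n + i - j)%N); last by rewrite /t; lia.
      set m := (n + i - j)%N.
      rewrite -TD (_ : (i + t + (j - (i + t)) = j)%N); last by lia.
      apply: (@Tinj n); rewrite -TD TUle ?leq_addr // addKn !TM -!TD.
      rewrite (_ : (n + i = j + m)%N); last by rewrite /m; lia.
      rewrite (addnC n j) !TD -!TM; congr (T j _).
      by rewrite TM -mulrA Ih' mulrA TV mulVf ?Teq0 // mul1r.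
    case: (leqP j i) => ji; case: (leqP (i + t) j) => rj; decide_ifs.
    * by rewrite [RHS]addrC del // eps.
    * rewrite (hz (n + i - j)%N); last lia.
      by rewrite eps // !(T0, mulr0, mul0r, addr0, add0r).
    * by rewrite del // !(T0, mulr0, mul0r, addr0, add0r).
    * rewrite (hz (n + i - j)%N); last lia.
      by rewrite !(T0, mulr0, mul0r, addr0, add0r).
  + have lo : (i + t - n < n)%N by lia.
    rewrite (@circXk_mul2 n _ t _ i j (Ordinal lo)) //; last by rewrite /t; lia.
    rewrite circE //= !hhlE.
    have zeta : (i + t - n <= j)%N -> (j <= i)%N ->
      T (i + t - n) (U t c^-1) * T (i + t - n) (T (j - (i + t - n)) (U n h`_(k - (j - (i + t - n)))))
      = T j (a^-1 * h`_(i - j)).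
      move=> rj ji; rewrite (_ : (k - (j - (i + t - n)) = i - j)%N); last by rewrite /t; lia.
      set m := (i - j)%N.
      apply: (@Tinj n); rewrite !TM -!TD.
      rewrite TUle; last by lia.
      rewrite TUle; last by lia.
      rewrite (_ : (n + (i + t - n) - t = j + m)%N); last by rewrite /m /t; lia.
      rewrite (_ : (n + (i + t - n) + (j - (i + t - n)) - n = j)%N); last by rewrite /t; lia.
      rewrite (addnC n j) !TD -!TM; congr (T j _).
      have E : T n h`_m = T n a * h`_m / T m c by rewrite -Ih' mulfK // Teq0.
      rewrite TM E TV TV.
      have ta : T n a != 0 by rewrite Teq0.
      have tc : T m c != 0 by rewrite Teq0.
      by rewrite mulrA mulKf // mulrC.
    case: (leqP j i) => ji; case: (leqP (i + t - n) j) => rj; decide_ifs.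
    * rewrite (hz (n + i - j)%N); last lia.
      by rewrite !(T0, mulr0, mul0r, addr0, add0r) zeta.
    * rewrite (hz (n + i - j)%N); last lia.
      rewrite (hz (i - j)%N); last by rewrite /t in rj; lia.
      by rewrite !(T0, mulr0, mul0r, addr0, add0r).
    * rewrite (hz (n + i - j)%N); last lia.
      by rewrite !(T0, mulr0, mul0r, addr0, add0r).
    * exfalso; rewrite /t in rj; lia.
Qed.

End Skew.

Theorem theorem5p6 (F : finFieldType) (theta : {rmorphism F -> F}) (n : nat)
    (a : F) (g h : {poly F}) (k : nat) :
  a != 0 ->
  'X^n - a%:P = smul theta h g ->
  (size h).-1 = k ->
  let g0 := g`_0 in
  let c := gamma theta n a g in
  let ghr := rho_r theta (thetaP theta (n%:Z) g) in
  let hhl := rho_l theta (thetaP theta (- (n%:Z)) h) in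
  let gsharp := smul theta (smul theta (a%:P) ghr) 'X^k
                - smul theta ((c * g0)%:P) ('X^n - (c^-1)%:P) in
  [/\ (circ theta n a g)^T = circ theta n c^-1 gsharp,
      circ theta n c 'X^k *m circ theta n a g
        = (circ theta n (thetaz theta (k%:Z) c^-1) (smul theta (a%:P) ghr))^T
    & circ theta n (thetaz theta (k%:Z - n%:Z) c^-1) 'X^(n - k)
        *m circ theta n a^-1 hhl
        = (circ theta n c (smul theta (a^-1)%:P h))^T ].
Proof. exact: main. Qed.
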